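(* Let $m\ge0$ and let $f:\mathbb{R}^n\to\mathbb{R}$ be $m$-weakly convex and $L$-Lipschitz continuous with $f^\star:=\inf_xf(x)>-\infty$. Run the proximal descent method (defined in the context) with $\beta\in(0,1)$, $\rho>0$, $\alpha=m+\rho$, from $x_1\in\mathbb{R}^n$. Let $\eta>0$, $\epsilon>0$, and let $k^\star$ be the smallest index such that $x_{k^\star}$ is an $(\eta,\epsilon)$-inexact stationary point. Then $k^\star\le K_{\max}(\eta,\epsilon)+1$ and the total number of function and subgradient evaluations performed before reaching $x_{k^\star}$ satisfies $$\sum_{i=1}^{k^\star-1}T_i\le\frac{8K_{\max}(\eta,\epsilon)}{(1-\beta)^2\rho}\Big(1+\frac m\rho\Big)^2L^2\max\Big\{\frac{2\rho}{\eta^2},\frac1\epsilon\Big\},$$ where $K_{\max}(\eta,\epsilon)=\Big\lceil\frac{2\alpha^2(f(x_1)-f^\star)}{m+\beta\rho}\frac1{\eta^2}+\frac{(1-\beta)(f(x_1)-f^\star)}{\beta}\frac1\epsilon+1\Big\rceil$.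
   Context: A function $f$ is $m$-weakly convex ($m\ge 0$) if $x\mapsto f(x)+\frac{m}{2}\|x\|^2$ is convex; its subdifferential is $\partial f(x)=\{v: f(y)\ge f(x)+\langle v,y-x\rangle-\frac{m}{2}\|y-x\|^2\ \forall y\}$, and for $\epsilon\ge0$, $\partial_\epsilon f(x)=\{v: f(y)\ge f(x)+\langle v,y-x\rangle-\frac{m}{2}\|y-x\|^2-\epsilon\ \forall y\}$. A point $x$ is an $(\eta,\epsilon)$-inexact stationary point if $\mathrm{dist}(0,\partial_\epsilon f(x))\le\eta$. Subroutine ProxDescent$(x_k,\beta,\rho)$: set $j=1$, choose $g_1\in\partial f(x_k)$, let $\tilde f_1(x)=f(x_k)+\langle g_1,x-x_k\rangle$, and compute $z_2=\arg\min_x\{\tilde f_1(x)+\frac\rho2\|x-x_k\|^2\}$. While $f(x_k)-\big(f(z_{j+1})+\frac m2\|z_{j+1}-x_k\|^2\big)<\beta\big(f(x_k)-\tilde f_j(z_{j+1})\big)$: choose $g_{j+1}$ with $g_{j+1}-m(z_{j+1}-x_k)\in\partial f(z_{j+1})$ and a convex $\tilde f_{j+1}:\mathbb{R}^n\to\mathbb{R}$ such that for all $x$: (i) $\tilde f_{j+1}(x)\le f(x)+\frac m2\|x-x_k\|^2$; (ii) $\tilde f_{j+1}(x)\ge\tilde f_j(z_{j+1})+\langle s_{j+1},x-z_{j+1}\rangle$ with $s_{j+1}=\rho(x_k-z_{j+1})$; (iii) $\tilde f_{j+1}(x)\ge f(z_{j+1})+\frac m2\|z_{j+1}-x_k\|^2+\langle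 g_{j+1},x-z_{j+1}\rangle$; compute $z_{j+2}=\arg\min_x\{\tilde f_{j+1}(x)+\frac\rho2\|x-x_k\|^2\}$ and increase $j$ by one. On exit, return $z_{j+1}$. $T_k$ denotes the number of trial points $z_2,\dots,z_{T_k+1}$ computed in the call. The proximal descent method: given $x_1\in\mathbb{R}^n$, set $x_{k+1}=$ ProxDescent$(x_k,\beta,\rho)$ for $k=1,2,\dots$; each trial point costs one function value and one subgradient evaluation, so $\sum_i T_i$ counts evaluations. *)

(* Defs.v *)
From HB Require Import structures.
From mathcomp Require Import all_boot all_order all_algebra.
From mathcomp Require Import reals.
Set Implicit Arguments. Unset Strict Implicit. Unset Printing Implicit Defensive.
Import Order.TTheory GRing.Theory Num.Theory.
Local Open Scope ring_scope.

Section Defs.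
Variables (R : realType) (n : nat).
Local Notation vec := 'rV[R]_n.

Definition dot (u v : vec) : R := \sum_(i < n) u ord0 i * v ord0 i.
Definition vnorm (u : vec) : R := Num.sqrt (dot u u).

Definition convex_fun (h : vec -> R) : Prop :=
  forall (x y : vec) (t : R), 0 <= t -> t <= 1 ->
    h (t *: x + (1 - t) *: y) <= t * h x + (1 - t) * h y.

Definition weakly_convex (m : R) (f : vec -> R) : Prop :=
  convex_fun (fun x => f x + m / 2 * vnorm x ^+ 2).

Definition lipschitz (L : R) (f : vec -> R) : Prop :=
  forall x y : vec, `|f x - f y| <= L * vnorm (x - y).

Definition subdiff (m : R) (f : vec -> R) (x v : vec) : Prop :=
  forall y : vec, f x + dot v (y - x) - m / 2 * vnorm (y - x) ^+ 2 <= f y.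

Definition esubdiff (m eps : R) (f : vec -> R) (x v : vec) : Prop :=
  forall y : vec, f x + dot v (y - x) - m / 2 * vnorm (y - x) ^+ 2 - eps <= f y.

(* dist(0, \partial_eps f(x)) <= eta, with dist the infimum of norms
   (equal to +oo if the set is empty) *)
Definition inexact_stationary (m eta eps : R) (f : vec -> R) (x : vec) : Prop :=
  forall d : R, 0 < d -> exists v : vec, esubdiff m eps f x v /\ vnorm v < eta + d.

Definition is_prox_min (ft : vec -> R) (rho : R) (xk z : vec) : Prop :=
  forall y : vec, ft z + rho / 2 * vnorm (z - xk) ^+ 2 <= ft y + rho / 2 * vnorm (y - xk) ^+ 2.

(* the while-loop test of ProxDescent at inner index j (uses z_{j+1}, ft_j) *)
Definition pd_continue (f : vec -> R) (m beta : R) (xk : vec)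
    (ft : nat -> vec -> R) (z : nat -> vec) (j : nat) : Prop :=
  f xk - (f (z j.+1) + m / 2 * vnorm (z j.+1 - xk) ^+ 2)
    < beta * (f xk - ft j (z j.+1)).

(* A (possibly non-terminating) execution of ProxDescent(xk, beta, rho):
   g j, ft j, z j are g_j, \tilde f_j, z_j (indices from 1 resp. 2).
   The constraints on step j+1 are only imposed while the loop is running. *)
Definition pd_trace (f : vec -> R) (m beta rho : R) (xk : vec)
    (g : nat -> vec) (ft : nat -> vec -> R) (z : nat -> vec) : Prop :=
  [/\ subdiff m f xk (g 1%N),
      (forall y, ft 1%N y = f xk + dot (g 1%N) (y - xk)),
      is_prox_min (ft 1%N) rho xk (z 2%N) &
      forall j : nat, (1 <= j)%N ->
        (forall j', (1 <= j' <= j)%N -> pd_continue f m beta xk ft z j') ->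
        [/\ subdiff m f (z j.+1) (g j.+1 - m *: (z j.+1 - xk)) /\
              convex_fun (ft j.+1),
            (forall y, ft j.+1 y <= f y + m / 2 * vnorm (y - xk) ^+ 2),
            (forall y, ft j (z j.+1) + dot (rho *: (xk - z j.+1)) (y - z j.+1)
                         <= ft j.+1 y),
            (forall y, f (z j.+1) + m / 2 * vnorm (z j.+1 - xk) ^+ 2
                         + dot (g j.+1) (y - z j.+1) <= ft j.+1 y) &
            is_prox_min (ft j.+1) rho xk (z j.+2)]].

(* the loop exits after exactly T trial points z_2, ..., z_{T+1} *)
Definition pd_exits_at (f : vec -> R) (m beta : R) (xk : vec)
    (ft : nat -> vec -> R) (z : nat -> vec) (T : nat) : Prop :=
  [/\ (1 <= T)%N, ~ pd_continue f m beta xk ft z T &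
      forall j, (1 <= j < T)%N -> pd_continue f m beta xk ft z j].

Definition pd_terminates (f : vec -> R) (m beta : R) (xk : vec)
    (ft : nat -> vec -> R) (z : nat -> vec) : Prop :=
  exists T, pd_exits_at f m beta xk ft z T.

(* An execution of the proximal descent method from x1: for every k >= 1 the
   call ProxDescent(x k, beta, rho) has trace (g k, ft k, z k); if it
   terminates, T k is its number of trial points and x (k+1) its output. *)
Definition prox_descent_run (f : vec -> R) (m beta rho : R) (x1 : vec)
    (x : nat -> vec) (g : nat -> nat -> vec) (ft : nat -> nat -> vec -> R)
    (z : nat -> nat -> vec) (T : nat -> nat) : Prop :=
  x 1%N = x1 /\
  forall k : nat, (1 <= k)%N ->
    pd_trace f m beta rho (x k) (g k) (ft k) (z k) /\
    (pd_terminates f m beta (x k) (ft k) (z k) ->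
       pd_exits_at f m beta (x k) (ft k) (z k) (T k) /\ x k.+1 = z k (T k).+1).

End Defs.

(* Main.v *)
Require Import Defs.
From HB Require Import structures.
From mathcomp Require Import all_boot all_order all_algebra.
From mathcomp Require Import reals.
From mathcomp Require Import ring lra zify.
From Stdlib Require Import Classical.
Import Order.TTheory GRing.Theory Num.Theory.
Set Implicit Arguments. Unset Strict Implicit. Unset Printing Implicit Defensive.
Local Open Scope ring_scope.



Lemma dotC (R : realType) (n : nat) (u v : 'rV[R]_n) : dot u v = dot v u.
Proof. by rewrite /dot; apply: eq_bigr => i _; rewrite mulrC. Qed.

Lemma dotDl (R : realType) (n : nat) (u v w : 'rV[R]_n) : dot (u + v) w = dot u w + dot v w.
Proof. by rewrite /dot -big_split; apply: eq_bigr => i _; rewrite !mxE mulrDl. Qed.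

Lemma dotZl (R : realType) (n : nat) (a : R) (u w : 'rV[R]_n) : dot (a *: u) w = a * dot u w.
Proof. by rewrite /dot mulr_sumr; apply: eq_bigr => i _; rewrite !mxE mulrA. Qed.

Lemma dotNl (R : realType) (n : nat) (u w : 'rV[R]_n) : dot (- u) w = - dot u w.
Proof. by rewrite -scaleN1r dotZl mulN1r. Qed.

Lemma dotBl (R : realType) (n : nat) (u v w : 'rV[R]_n) : dot (u - v) w = dot u w - dot v w.
Proof. by rewrite dotDl dotNl. Qed.

Lemma dotDr (R : realType) (n : nat) (u v w : 'rV[R]_n) : dot w (u + v) = dot w u + dot w v.
Proof. by rewrite dotC dotDl !(dotC w). Qed.
Lemma dotZr (R : realType) (n : nat) (a : R) (u w : 'rV[R]_n) : dot w (a *: u) = a * dot w u.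
Proof. by rewrite dotC dotZl dotC. Qed.
Lemma dotNr (R : realType) (n : nat) (u w : 'rV[R]_n) : dot w (- u) = - dot w u.
Proof. by rewrite dotC dotNl dotC. Qed.
Lemma dotBr (R : realType) (n : nat) (u v w : 'rV[R]_n) : dot w (u - v) = dot w u - dot w v.
Proof. by rewrite dotC dotBl !(dotC w). Qed.
Lemma dot0l (R : realType) (n : nat) (w : 'rV[R]_n) : dot 0 w = 0.
Proof. by rewrite -(scale0r (0 : 'rV[R]_n)) dotZl mul0r. Qed.
Lemma dot0r (R : realType) (n : nat) (w : 'rV[R]_n) : dot w 0 = 0.
Proof. by rewrite dotC dot0l. Qed.

Lemma dot_ge0 (R : realType) (n : nat) (u : 'rV[R]_n) : 0 <= dot u u.
Proof. by rewrite /dot; apply: sumr_ge0 => i _; rewrite -expr2 sqr_ge0. Qed.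

Lemma vnorm_sq (R : realType) (n : nat) (u : 'rV[R]_n) : vnorm u ^+ 2 = dot u u.
Proof. by rewrite /vnorm sqr_sqrtr // dot_ge0. Qed.

Lemma vnorm_ge0 (R : realType) (n : nat) (u : 'rV[R]_n) : 0 <= vnorm u.
Proof. by rewrite /vnorm sqrtr_ge0. Qed.

Definition dotE := (dotDl, dotDr, dotZl, dotZr, dotNl, dotNr, dotBl, dotBr, dot0l, dot0r).



Lemma le0_small (R : realType) (A C : R) :
  0 <= C -> (forall t, 0 < t -> t <= 1 -> A <= t * C) -> A <= 0.
Proof.
move=> hC H; case: (lerP A 0) => // hA.
have hCA : 0 < C + A by lra.
have ht1 : 0 < A / (C + A) by apply: divr_gt0.
have ht2 : A / (C + A) <= 1 by rewrite ler_pdivrMr //; lra.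
have := H _ ht1 ht2.
rewrite mulrAC ler_pdivlMr // => h.
have : A * C + A * A <= A * C by nra.
nra.
Qed.

Lemma dot_sq_lin (R : realType) (n : nat) (a b : 'rV[R]_n) (t : R) :
  dot (a + t *: b) (a + t *: b) = dot a a + 2 * t * dot a b + t ^+ 2 * dot b b.
Proof. rewrite dotDl !dotDr !dotZl !dotZr (dotC b a); ring. Qed.

Lemma prox_subgrad (R : realType) (n : nat) (ft : 'rV[R]_n -> R) (rho : R) (xk z : 'rV[R]_n) :
  0 < rho -> convex_fun ft -> is_prox_min ft rho xk z ->
  forall y, ft z + dot (rho *: (xk - z)) (y - z) <= ft y.
Proof.
move=> hr hc hp y.
set P := dot (z - xk) (y - z).
set D := dot (y - z) (y - z).
have hN : dot (rho *: (xk - z)) (y - z) = - rho * P.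
  by rewrite /P -opprB dotZl dotNl mulrN mulNr.
rewrite hN.
suff : ft z - ft y - rho * P <= 0 by lra.
apply: (@le0_small _ _ (rho / 2 * D)).
  by apply: mulr_ge0; [lra | apply: dot_ge0].
move=> t ht0 ht1.
have hw : t *: y + (1 - t) *: z - xk = (z - xk) + t *: (y - z).
  by apply/rowP => i; rewrite !mxE; ring.
have hcv := hc y z t (ltW ht0) ht1.
have hpm := hp (t *: y + (1 - t) *: z).
rewrite !vnorm_sq hw dot_sq_lin -/P -/D in hpm.
have : t * (ft z - ft y - rho * P) <= t * (t * (rho / 2 * D)) by nra.
by rewrite ler_pM2l.
Qed.

Lemma vnormZ (R : realType) (n : nat) (t : R) (v : 'rV[R]_n) :
  0 <= t -> vnorm (t *: v) = t * vnorm v.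
Proof.
move=> ht.
have h1 : vnorm (t *: v) ^+ 2 = (t * vnorm v) ^+ 2.
  by rewrite exprMn !vnorm_sq dotZl dotZr mulrA -expr2.
have h2 := vnorm_ge0 (t *: v); have h3 := vnorm_ge0 v.
have h4 : 0 <= t * vnorm v by apply: mulr_ge0.
by apply/eqP; rewrite -(@eqrXn2 _ 2) // h1.
Qed.

Lemma subgrad_bound (R : realType) (n : nat) (f : 'rV[R]_n -> R) (m L : R) (z v : 'rV[R]_n) :
  0 <= m -> lipschitz L f -> subdiff m f z v -> dot v v <= L ^+ 2.
Proof.
move=> hm hL hs.
have hN0 := vnorm_ge0 v.
rewrite -vnorm_sq.
case: (lerP (vnorm v) 0) => hN.
  have -> : vnorm v = 0 by apply/eqP; rewrite eq_le hN hN0.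
  by rewrite expr0n /= sqr_ge0.
suff hNL : vnorm v <= L.
  by rewrite ler_pXn2r // nnegrE; lra.
suff : vnorm v - L <= 0 by lra.
apply: (@le0_small _ _ (m / 2 * vnorm v)).
  by apply: mulr_ge0 => //; lra.
move=> t ht0 ht1.
have ee : z + t *: v - z = t *: v by apply/rowP => i; rewrite !mxE; ring.
have := hs (z + t *: v).
rewrite ee dotZr vnorm_sq dotZl dotZr -vnorm_sq => h.
have hl := hL (z + t *: v) z.
rewrite ee in hl.
have hz := vnormZ v (ltW ht0).
have hab := ler_norm (f (z + t *: v) - f z).
set N := vnorm v in h hz hN hN0 *.
set q := vnorm (t *: v) in hl hz.
set F1 := f (z + t *: v) in h hl hab.
have hq : 0 <= q := vnorm_ge0 _.
have hLq : L * q <= L * (t * N) by rewrite hz.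
  have : t * (N * N) <= t * (N * (L + t * (m / 2 * N))) by nra.
  rewrite ler_pM2l // => h2.
  have : N * N <= N * (L + t * (m / 2 * N)) by [].
  rewrite ler_pM2l //. lra.
Qed.



Definition good (R : realType) (n : nat) (f : 'rV[R]_n -> R) (m rho : R) (xk : 'rV[R]_n)
  (ft : nat -> 'rV[R]_n -> R) (z : nat -> 'rV[R]_n) (j : nat) : Prop :=
  [/\ convex_fun (ft j), (forall y, ft j y <= f y + m / 2 * vnorm (y - xk) ^+ 2) &
      is_prox_min (ft j) rho xk (z j.+1)].

Lemma good_of_trace (R : realType) (n : nat) (f : 'rV[R]_n -> R) (m beta rho : R) (xk : 'rV[R]_n)
  (g : nat -> 'rV[R]_n) (ft : nat -> 'rV[R]_n -> R) (z : nat -> 'rV[R]_n) (j : nat) :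
  pd_trace f m beta rho xk g ft z -> (1 <= j)%N ->
  (forall j', (1 <= j' < j)%N -> pd_continue f m beta xk ft z j') ->
  good f m rho xk ft z j.
Proof.
case=> hg hft1 hp1 hstep.
case: j => [//|[|j]] _ hc.
  split => //.
    move=> a b t ht0 ht1.
    rewrite !hft1.
    have -> : t *: a + (1 - t) *: b - xk = t *: (a - xk) + (1 - t) *: (b - xk).
      by apply/rowP => i; rewrite !mxE; ring.
    rewrite (dotDr (t *: _)) !dotZr; rewrite le_eqVlt; apply/orP; left; apply/eqP; ring.
  move=> y; rewrite hft1; have := hg y; lra.
have hc' : forall j', (1 <= j' <= j.+1)%N -> pd_continue f m beta xk ft z j'.
  by move=> j' /andP [h1 h2]; apply: hc; rewrite h1.
have [[_ hcv] hle _ _ hpm] := hstep j.+1 isT hc'.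
by split.
Qed.

Lemma good_facts (R : realType) (n : nat) (f : 'rV[R]_n -> R) (m rho : R) (xk : 'rV[R]_n)
  (ft : nat -> 'rV[R]_n -> R) (z : nat -> 'rV[R]_n) (j : nat) :
  0 < rho -> good f m rho xk ft z j ->
  (forall y, ft j (z j.+1) + dot (rho *: (xk - z j.+1)) (y - z j.+1)
            <= f y + m / 2 * dot (y - xk) (y - xk)) /\
  rho * dot (xk - z j.+1) (xk - z j.+1) <= f xk - ft j (z j.+1).
Proof.
move=> hr [hcv hle hpm].
have KL := prox_subgrad hr hcv hpm.
have h1 : forall y, ft j (z j.+1) + dot (rho *: (xk - z j.+1)) (y - z j.+1)
            <= f y + m / 2 * dot (y - xk) (y - xk).
  by move=> y; rewrite -vnorm_sq; apply: le_trans (KL y) (hle y).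
split => //.
have := h1 xk; rewrite subrr dot0l mulr0 addr0 dotZl; lra.
Qed.

Lemma nonstat_Del (R : realType) (n : nat) (f : 'rV[R]_n -> R) (m rho eta eps : R) (xk : 'rV[R]_n)
  (ft : nat -> 'rV[R]_n -> R) (z : nat -> 'rV[R]_n) (j : nat) :
  0 < rho -> 0 < eta -> good f m rho xk ft z j ->
  ~ inexact_stationary m eta eps f xk ->
  let Del := f xk - ft j (z j.+1) - rho / 2 * dot (xk - z j.+1) (xk - z j.+1) in
  eta ^+ 2 / (2 * rho) < Del \/ eps < Del.
Proof.
move=> hr he hg hns /=.
have [h1 h2] := good_facts hr hg.
set u := xk - z j.+1 in h1 h2 *.
set r2 := dot u u in h2 *.
have hr2 : 0 <= r2 by apply: dot_ge0.
case: (lerP (rho ^+ 2 * r2) (eta ^+ 2)) => hA; last first.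
  left; rewrite ltr_pdivrMr; last by lra.
  nra.
case: (lerP (f xk - ft j (z j.+1) - rho * r2) eps) => hB; last first.
  right; nra.
exfalso; apply: hns => d hd.
exists (rho *: u); split.
  move=> y; have := h1 y.
  have -> : y - z j.+1 = (y - xk) + u by apply/rowP => i; rewrite !mxE; ring.
  rewrite dotDr (dotZl _ u u) -/r2 vnorm_sq; lra.
have hv : vnorm (rho *: u) <= eta.
  rewrite -(ler_pXn2r (_ : (0 < 2)%N)) ?nnegrE ?vnorm_ge0 ?(ltW he) //.
  by rewrite vnorm_sq dotZl dotZr mulrA -expr2.
lra.
Qed.

Lemma improve_scalar (R : realType) (rho W2 ww a G dphi : R) :
  0 < rho -> 0 < a -> a <= G -> 0 <= ww -> ww <= W2 -> rho * a <= W2 ->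
  (forall lam, 0 <= lam -> lam <= 1 -> lam * G - lam ^+ 2 * ww / (2 * rho) <= dphi) ->
  rho * a ^+ 2 / (2 * W2) <= dphi.
Proof.
move=> hr ha haG hw hwW haW H.
have hW : 0 < W2 by nra.
set lam := rho * a / W2.
have hl0 : 0 <= lam by apply: divr_ge0; nra.
have hl1 : lam <= 1 by rewrite ler_pdivrMr // mul1r.
apply: le_trans (H _ hl0 hl1).
have e1 : lam * W2 = rho * a by rewrite /lam divfK // gt_eqF.
have h1 : lam * a <= lam * G by apply: ler_wpM2l.
have h2 : lam ^+ 2 * ww / (2 * rho) <= lam ^+ 2 * W2 / (2 * rho).
  rewrite ler_pM2r; last by rewrite invr_gt0; lra.
  by apply: ler_wpM2l => //; apply: sqr_ge0.
suff : rho * a ^+ 2 / (2 * W2) <= lam * a - lam ^+ 2 * W2 / (2 * rho) by lra.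
have -> : lam ^+ 2 * W2 / (2 * rho) = lam * a / 2.
  rewrite expr2 -(mulrA lam lam W2) e1; field; lra.
have -> : lam * a - lam * a / 2 = lam * a / 2 by field.
rewrite /lam le_eqVlt; apply/orP; left; apply/eqP; field; lra.
Qed.

Lemma dot_sum_le (R : realType) (n : nat) (p q : 'rV[R]_n) :
  dot (p + q) (p + q) <= 2 * dot p p + 2 * dot q q.
Proof.
have := dot_ge0 (p - q).
rewrite !dotBl !dotBr !dotDl !dotDr (dotC q p); lra.
Qed.

Lemma improve_vec (R : realType) (n : nat) (f : 'rV[R]_n -> R) (m L beta rho : R)
  (xk z y g : 'rV[R]_n) (a0 b : R) :
  0 <= m -> 0 < rho -> 0 < beta -> beta < 1 ->
  a0 + dot (rho *: (xk - z)) (y - z) <= b ->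
  f z + m / 2 * vnorm (z - xk) ^+ 2 + dot g (y - z) <= b ->
  dot (g - m *: (z - xk)) (g - m *: (z - xk)) <= L ^+ 2 ->
  f xk - (f z + m / 2 * vnorm (z - xk) ^+ 2) < beta * (f xk - a0) ->
  let r2 := dot (xk - z) (xk - z) in
  let Del := f xk - a0 - rho / 2 * r2 in
  rho / 2 * r2 <= Del -> Del <= L ^+ 2 / (2 * rho) -> 0 < Del ->
  f xk - b - rho / 2 * dot (xk - y) (xk - y)
    <= Del - rho ^+ 3 * (1 - beta) ^+ 2 / (8 * L ^+ 2 * (m + rho) ^+ 2) * Del ^+ 2.
Proof.
move=> hm hr hb0 hb1 hii hiii hsg hcont r2 Del hrD hDL hD0.
set d := y - z.
set w := g + rho *: (z - xk).
set al := m + rho.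
have hzx : vnorm (z - xk) ^+ 2 = r2.
  by rewrite vnorm_sq /r2 -opprB dotNl dotNr opprK.
rewrite hzx in hiii hcont.
have exy : xk - y = (xk - z) + (-1) *: d by rewrite /d; apply/rowP => i; rewrite !mxE; ring.
have hxy : dot (xk - y) (xk - y) = r2 - 2 * dot (xk - z) d + dot d d.
  by rewrite exy dot_sq_lin -/r2; ring.
have hdd := dot_ge0 d.
set P := dot (xk - z) d in hxy.
have hwd : dot w d = dot g d - rho * P.
  by rewrite /w dotDl dotZl /P -opprB dotNl; ring.
have hii' : a0 + rho * P <= b by rewrite dotZl in hii.
have hr2 : 0 <= r2 by apply: dot_ge0.
have hL2 : 0 < L ^+ 2.
  have h := lt_le_trans hD0 hDL.
  by rewrite pmulr_lgt0 // invr_gt0 in h; lra.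
set K := L ^+ 2 / rho.
have hK : L ^+ 2 / (2 * rho) = K / 2 by rewrite /K; field; lra.
have hr2L : r2 <= K / rho.
  rewrite ler_pdivlMr //; rewrite hK /Del in hDL; rewrite /Del in hrD; lra.
set W2 := 4 * L ^+ 2 * al ^+ 2 / rho ^+ 2.
have hal : rho <= al by rewrite /al; lra.
set Q := al ^+ 2 / rho ^+ 2.
have hQ : 1 <= Q.
  have : rho ^+ 2 <= al ^+ 2 by nra.
  by rewrite /Q ler_pdivlMr ?exprn_gt0 // mul1r.
have hW2 : W2 = 4 * L ^+ 2 * Q by rewrite /W2 /Q mulrA.
have hww : dot w w <= W2.
  have ew : w = (g - m *: (z - xk)) + al *: (z - xk).
    by rewrite /w /al; apply/rowP => i; rewrite !mxE; ring.
  have := dot_sum_le (g - m *: (z - xk)) (al *: (z - xk)).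
  rewrite -ew dotZl dotZr.
  have -> : al * (al * dot (z - xk) (z - xk)) = al ^+ 2 * r2 by rewrite -hzx vnorm_sq mulrA expr2.
  have : al ^+ 2 * r2 <= al ^+ 2 * (K / rho) by apply: ler_wpM2l => //; apply: sqr_ge0.
  have -> : al ^+ 2 * (K / rho) = L ^+ 2 * Q by rewrite /K /Q; field; lra.
  rewrite hW2; nra.
have hw0 := dot_ge0 w.
set G := f z + m / 2 * r2 - a0.
set a := (1 - beta) * Del.
have ha0 : 0 < a by rewrite /a; apply: mulr_gt0 => //; lra.
have hDe : Del = f xk - a0 - rho / 2 * r2 by [].
have haG : a <= G.
  have : 0 <= (1 - beta) * (rho / 2 * r2) by apply: mulr_ge0; [lra | apply: mulr_ge0 => //; lra].
  have hGe : G = f z + m / 2 * r2 - a0 by [].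
  have hae : a = (1 - beta) * Del by [].
  nra.
have haW : rho * a <= W2.
  have : rho * Del <= L ^+ 2 / 2 by move: hDL; rewrite ler_pdivlMr; [lra|lra].
  rewrite hW2 /a; nra.
set dphi := (b + rho / 2 * dot (xk - y) (xk - y)) - (a0 + rho / 2 * r2).
have hd : forall lam, 0 <= lam -> lam <= 1 -> lam * G - lam ^+ 2 * dot w w / (2 * rho) <= dphi.
  move=> lam hl0 hl1.
  have hsq := dot_ge0 (rho *: d + lam *: w).
  rewrite dotDl !dotDr !dotZl !dotZr (dotC d w) in hsq.
  have hsq' : 0 <= rho / 2 * dot d d + lam * dot w d + lam ^+ 2 * dot w w / (2 * rho).
    have -> : rho / 2 * dot d d + lam * dot w d + lam ^+ 2 * dot w w / (2 * rho)
       = (rho * (rho * dot d d) + rho * (lam * dot w d) + (lam * (rho * dot w d) + lam * (lam * dot w w))) / (2 * rho).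
      by field; lra.
    by apply: divr_ge0 => //; lra.
  have hiii' : f z + m / 2 * r2 + dot g d <= b by [].
  rewrite /dphi hxy; rewrite /G.
  have : 0 <= lam * (b - (f z + m / 2 * r2 + dot g d)) by apply: mulr_ge0; lra.
  have : 0 <= (1 - lam) * (b - (a0 + rho * P)) by apply: mulr_ge0; lra.
  rewrite hwd in hsq'.
  nra.
have := improve_scalar hr ha0 haG hw0 hww haW hd.
have -> : rho * a ^+ 2 / (2 * W2) = rho ^+ 3 * (1 - beta) ^+ 2 / (8 * L ^+ 2 * al ^+ 2) * Del ^+ 2.
  rewrite /a /W2; field; apply/and3P; split; apply/eqP => hh; [lra | by rewrite hh expr0n /= ltxx in hL2 | lra].
rewrite /dphi /Del; lra.
Qed.



Lemma first_fail (Cn : nat -> Prop) (N : nat) :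
  (forall j, (1 <= j <= N)%N -> Cn j) \/
  exists T, [/\ (1 <= T <= N)%N, ~ Cn T & forall j, (1 <= j < T)%N -> Cn j].
Proof.
elim: N => [|N IH]; first by left => -[|j].
case: IH => [H|[T [h1 h2 h3]]]; last first.
  by right; exists T; split => //; move: h1 => /andP [-> /leqW ->].
case: (classic (Cn N.+1)) => hN.
  left => j /andP [hj1 hj2]; move: hj2; rewrite leq_eqVlt => /orP [/eqP -> //|].
  by rewrite ltnS => hj; apply: H; rewrite hj1.
right; exists N.+1; split => //.
  by rewrite leqnn.

Qed.

Lemma recip_step (R : realType) (D D' c : R) :
  0 < D -> 0 < D' -> 0 <= c -> D' <= D - c * D ^+ 2 -> 1 / D + c <= 1 / D'.
Proof.
move=> hD hD' hc h.
have -> : 1 / D + c = (1 + c * D) / D by field; lra.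
rewrite ler_pdivlMr // mulrC mulrA ler_pdivrMr // mul1r.
have h1 : D' * (1 + c * D) <= (D - c * D ^+ 2) * (1 + c * D).
  by apply: ler_wpM2r => //; nra.
have h2 : 0 <= c ^+ 2 * D ^+ 3 by apply: mulr_ge0; [apply: sqr_ge0 | apply: exprn_ge0; lra].
have e : (D - c * D ^+ 2) * (1 + c * D) = D - c ^+ 2 * D ^+ 3 by ring.
lra.
Qed.

Lemma count_recip (R : realType) (D : nat -> R) (c : R) (J : nat) :
  0 <= c -> (forall j, (1 <= j <= J.+1)%N -> 0 < D j) ->
  (forall j, (1 <= j <= J)%N -> D j.+1 <= D j - c * D j ^+ 2) ->
  1 / D 1%N + J%:R * c <= 1 / D J.+1.
Proof.
move=> hc; elim: J => [|J IH] hpos hdec; first by rewrite mul0r addr0.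
have IH' : 1 / D 1%N + J%:R * c <= 1 / D J.+1.
  apply: IH.
    by move=> j /andP [h1 h2]; apply: hpos; rewrite h1 /=; apply: leqW.
  by move=> j /andP [h1 h2]; apply: hdec; rewrite h1 /=; apply: leqW.
have hs : 1 / D J.+1 + c <= 1 / D J.+2.
  apply: recip_step => //.
  - by apply: hpos; rewrite /= leqW.
  - by apply: hpos; rewrite leqnn.
  - by apply: hdec; rewrite leqnn.
rewrite -natr1 mulrDl mul1r; lra.
Qed.

Definition Delj (R : realType) (n : nat) (f : 'rV[R]_n -> R) (rho : R) (xk : 'rV[R]_n)
  (ft : nat -> 'rV[R]_n -> R) (z : nat -> 'rV[R]_n) (j : nat) : R :=
  f xk - ft j (z j.+1) - rho / 2 * dot (xk - z j.+1) (xk - z j.+1).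

Lemma Del1_le (R : realType) (n : nat) (f : 'rV[R]_n -> R) (m L beta rho : R) (xk : 'rV[R]_n)
  (g : nat -> 'rV[R]_n) (ft : nat -> 'rV[R]_n -> R) (z : nat -> 'rV[R]_n) :
  pd_trace f m beta rho xk g ft z -> lipschitz L f -> 0 <= m -> 0 < rho ->
  Delj f rho xk ft z 1 <= L ^+ 2 / (2 * rho).
Proof.
case=> hg hft1 _ _ hL hm hr.
have hgg := subgrad_bound hm hL hg.
rewrite /Delj hft1.
set e := z 2%N - xk.
have ee : xk - z 2%N = (-1) *: e by rewrite /e; apply/rowP => i; rewrite !mxE; ring.
rewrite ee dotZl dotZr.
have hsq := dot_ge0 (g 1%N + rho *: e).
rewrite dotDl !dotDr !dotZl !dotZr (dotC e) in hsq.
have -> : L ^+ 2 / (2 * rho) = (L ^+ 2 / rho) / 2 by field; lra.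
rewrite ler_pdivlMr; last by lra.
have : dot (g 1%N) (g 1%N) / rho <= L ^+ 2 / rho by rewrite ler_pM2r // invr_gt0.
suff : 2 * (- dot (g 1%N) e - rho / 2 * (-1 * (-1 * dot e e))) <= dot (g 1%N) (g 1%N) / rho by lra.
rewrite ler_pdivlMr //.
nra.
Qed.

Lemma step_dec (R : realType) (n : nat) (f : 'rV[R]_n -> R) (m L beta rho : R) (xk : 'rV[R]_n)
  (g : nat -> 'rV[R]_n) (ft : nat -> 'rV[R]_n -> R) (z : nat -> 'rV[R]_n) (j : nat) :
  pd_trace f m beta rho xk g ft z -> lipschitz L f -> 0 <= m -> 0 < rho -> 0 < beta -> beta < 1 ->
  (1 <= j)%N -> (forall j', (1 <= j' <= j)%N -> pd_continue f m beta xk ft z j') ->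
  Delj f rho xk ft z j <= L ^+ 2 / (2 * rho) -> 0 < Delj f rho xk ft z j ->
  Delj f rho xk ft z j.+1 <= Delj f rho xk ft z j
     - rho ^+ 3 * (1 - beta) ^+ 2 / (8 * L ^+ 2 * (m + rho) ^+ 2) * Delj f rho xk ft z j ^+ 2.
Proof.
move=> htr hL hm hr hb0 hb1 hj hc hDL hD0.
have hgood : good f m rho xk ft z j.
  apply: (good_of_trace htr hj) => j' /andP [h1 h2]; apply: hc; rewrite h1; exact: ltnW.
have [_ h2] := good_facts hr hgood.
have [[hsd _] _ hii hiii _] := (let: And4 a b c d := htr in d) j hj hc.
have hsg := subgrad_bound hm hL hsd.
have hcj := hc j (_ : (1 <= j <= j)%N).
rewrite /Delj.
apply: (improve_vec hm hr hb0 hb1 (hii _) (hiii _) hsg) => //.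
- by apply: hcj; rewrite hj leqnn.
- move: hD0 hDL h2; rewrite /Delj; lra.
Qed.

Lemma call_count (R : realType) (n : nat) (f : 'rV[R]_n -> R) (m L beta rho eta eps : R) (xk : 'rV[R]_n)
  (g : nat -> 'rV[R]_n) (ft : nat -> 'rV[R]_n -> R) (z : nat -> 'rV[R]_n) (T : nat) :
  pd_trace f m beta rho xk g ft z -> lipschitz L f -> 0 <= m -> 0 < rho -> 0 < beta -> beta < 1 ->
  0 < eta -> 0 < eps -> ~ inexact_stationary m eta eps f xk ->
  (1 <= T)%N -> (forall j, (1 <= j < T)%N -> pd_continue f m beta xk ft z j) ->
  T%:R <= 8 / ((1 - beta) ^+ 2 * rho) * (1 + m / rho) ^+ 2 * L ^+ 2
             * Num.max (2 * rho / eta ^+ 2) (1 / eps).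
Proof.
move=> htr hL hm hr hb0 hb1 he hep hns hT hc.
set D := Delj f rho xk ft z.
set M := Num.max (2 * rho / eta ^+ 2) (1 / eps).
set c := rho ^+ 3 * (1 - beta) ^+ 2 / (8 * L ^+ 2 * (m + rho) ^+ 2).
have hc0 : 0 <= c.
  rewrite /c; apply: divr_ge0; first by apply: mulr_ge0; [apply: exprn_ge0; lra | apply: sqr_ge0].
  by apply: mulr_ge0; [apply: mulr_ge0; [lra|apply: sqr_ge0] | apply: sqr_ge0].
have hgood : forall j, (1 <= j <= T)%N -> good f m rho xk ft z j.
  move=> j /andP [h1 h2]; apply: (good_of_trace htr h1) => j' /andP [h3 h4].
  by apply: hc; rewrite h3 /=; apply: leq_trans h4 h2.
have hpos : forall j, (1 <= j <= T)%N -> 0 < D j /\ 1 / D j < M.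
  move=> j hj; have := nonstat_Del hr he (hgood j hj) hns; rewrite -/(Delj _ _ _ _ _ _) -/D.
  have hM1 : 2 * rho / eta ^+ 2 <= M by rewrite /M le_max lexx.
  have hM2 : 1 / eps <= M by rewrite /M le_max lexx orbT.
  have he2 : 0 < eta ^+ 2 by apply: exprn_gt0.
  case=> hD.
    have hD0 : 0 < D j by apply: lt_trans hD; apply: divr_gt0 => //; lra.
    split => //; apply: lt_le_trans hM1.
    rewrite ltr_pdivrMr // mulrAC ltr_pdivlMr //.
    move: hD; rewrite ltr_pdivrMr; last by lra.
    lra.
  have hD0 : 0 < D j by apply: lt_trans hD.
  split => //; apply: lt_le_trans hM2.
  by rewrite ltr_pdivrMr // mulrAC ltr_pdivlMr // !mul1r.
have hD1 := Del1_le htr hL hm hr.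
have hup : forall j, (1 <= j <= T)%N -> D j <= L ^+ 2 / (2 * rho).
  elim=> [//|j IH] /andP [_ hj].
  case: j IH hj => [_ _ //|j IH hj].
  have hj' : (1 <= j.+1 <= T)%N by rewrite /= ltnW.
  have hle := IH hj'.
  have hcc : forall j', (1 <= j' <= j.+1)%N -> pd_continue f m beta xk ft z j'.
    by move=> j' /andP [h1 h2]; apply: hc; rewrite h1 /=; apply: leq_ltn_trans h2 hj.
  have hdec := step_dec htr hL hm hr hb0 hb1 (isT : (1 <= j.+1)%N) hcc hle (proj1 (hpos _ hj')).
  rewrite -/D -/c in hdec.
  have : 0 <= c * D j.+1 ^+ 2 by apply: mulr_ge0 => //; apply: sqr_ge0.
  lra.
have hT1 : (1 <= T <= T)%N by rewrite hT leqnn.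
have [hDT hDTM] := hpos T hT1.
have hD1p := proj1 (hpos 1%N (_ : (1 <= 1 <= T)%N)).
have hL2 : 0 < L ^+ 2.
  have h := lt_le_trans (hD1p hT) hD1.
  by rewrite pmulr_lgt0 // invr_gt0 in h; lra.
have hLn : L != 0 by apply/eqP => hh; rewrite hh expr0n /= ltxx in hL2.
have hcpos : 0 < c.
  rewrite /c; apply: divr_gt0; first by apply: mulr_gt0; [apply: exprn_gt0; lra | apply: exprn_gt0; lra].
  by apply: mulr_gt0; [apply: mulr_gt0; [lra|] | apply: exprn_gt0; lra].
have hcD1 : c <= 1 / D 1%N.
  rewrite ler_pdivlMr ?hD1p //.
  have : c * D 1%N <= c * (L ^+ 2 / (2 * rho)) by apply: ler_wpM2l.
  have -> : c * (L ^+ 2 / (2 * rho)) = rho ^+ 2 * (1 - beta) ^+ 2 / (16 * (m + rho) ^+ 2).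
    by rewrite /c; field; rewrite hLn !andbT; apply/andP; split; apply/eqP; lra.
  have : rho ^+ 2 * (1 - beta) ^+ 2 / (16 * (m + rho) ^+ 2) <= 1.
    rewrite ler_pdivrMr; last by apply: mulr_gt0; [lra | apply: exprn_gt0; lra].
    have : (1 - beta) ^+ 2 <= 1 by nra.
    have : rho ^+ 2 <= (m + rho) ^+ 2 by nra.
    nra.
  lra.
have hcount : 1 / D 1%N + (T.-1)%:R * c <= 1 / D T.
  have -> : T = (T.-1).+1 by rewrite prednK.
  apply: count_recip => //.
  - by move=> j hj; apply: (proj1 (hpos j _)); move: hj hT; clear; lia.
  - move=> j /andP [h1 h2].
    have hj : (1 <= j <= T)%N by move: h1 h2 hT; clear; lia.
    have hcc : forall j', (1 <= j' <= j)%N -> pd_continue f m beta xk ft z j'.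
      move=> j' /andP [h3 h4]; apply: hc; move: h3 h4 h2 hT; clear; lia.
    exact: (step_dec htr hL hm hr hb0 hb1 h1 hcc (hup j hj) (proj1 (hpos _ hj))).
have hTc : T%:R * c < M.
  have -> : T = (T.-1).+1 by rewrite prednK.
  rewrite -natr1 mulrDl mul1r; lra.
have -> : 8 / ((1 - beta) ^+ 2 * rho) * (1 + m / rho) ^+ 2 * L ^+ 2 * M = M / c.
  rewrite /c; field; rewrite hLn; apply/and4P; split => //; apply/eqP; lra.
rewrite ler_pdivlMr //; lra.
Qed.

Lemma call_terminates (R : realType) (n : nat) (f : 'rV[R]_n -> R) (m L beta rho eta eps : R) (xk : 'rV[R]_n)
  (g : nat -> 'rV[R]_n) (ft : nat -> 'rV[R]_n -> R) (z : nat -> 'rV[R]_n) :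
  pd_trace f m beta rho xk g ft z -> lipschitz L f -> 0 <= m -> 0 < rho -> 0 < beta -> beta < 1 ->
  0 < eta -> 0 < eps -> ~ inexact_stationary m eta eps f xk ->
  pd_terminates f m beta xk ft z.
Proof.
move=> htr hL hm hr hb0 hb1 he hep hns.
set P := 8 / ((1 - beta) ^+ 2 * rho) * (1 + m / rho) ^+ 2 * L ^+ 2
             * Num.max (2 * rho / eta ^+ 2) (1 / eps).
have hP : 0 <= P.
  rewrite /P; apply: mulr_ge0; last first.
    rewrite le_max; apply/orP; left; apply: divr_ge0; [lra | apply: sqr_ge0].
  apply: mulr_ge0; last by apply: sqr_ge0.
  apply: mulr_ge0; last by apply: sqr_ge0.
  apply: divr_ge0; first lra.
  by apply: mulr_ge0; [apply: sqr_ge0 | lra].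
have hN := archi_boundP hP.
case: (first_fail (pd_continue f m beta xk ft z) (Num.Def.archi_bound P)) => [H|[T [h1 h2 h3]]].
  have := call_count htr hL hm hr hb0 hb1 he hep hns (isT : (1 <= (Num.Def.archi_bound P).+1)%N)
    (fun j hj => H j hj).
  rewrite -/P -natr1; lra.
exists T; split => //; by case/andP: h1.
Qed.

Lemma exit_decrease (R : realType) (n : nat) (f : 'rV[R]_n -> R) (m beta rho eta eps : R) (xk : 'rV[R]_n)
  (g : nat -> 'rV[R]_n) (ft : nat -> 'rV[R]_n -> R) (z : nat -> 'rV[R]_n) (T : nat) :
  pd_trace f m beta rho xk g ft z -> 0 <= m -> 0 < rho -> 0 < beta -> beta < 1 ->
  0 < eta -> 0 < eps -> pd_exits_at f m beta xk ft z T ->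
  ~ inexact_stationary m eta eps f (z T.+1) ->
  1 < (f xk - f (z T.+1)) *
        (2 * (m + rho) ^+ 2 / (m + beta * rho) / eta ^+ 2 + (1 - beta) / beta / eps).
Proof.
move=> htr hm hr hb0 hb1 he hep [hT hnc hc] hns.
have hgood : good f m rho xk ft z T.
  by apply: (good_of_trace htr hT) => j hj; apply: hc.
have [h1 h2] := good_facts hr hgood.
set zz := z T.+1 in h1 h2 hns *.
set u := xk - zz in h1 h2.
set r2 := dot u u in h2.
have hr2 : 0 <= r2 by apply: dot_ge0.
have hzx : vnorm (zz - xk) ^+ 2 = r2.
  by rewrite vnorm_sq /r2 /u -opprB dotNl dotNr opprK.
have hex : beta * (f xk - ft T zz) <= f xk - (f zz + m / 2 * r2).
  by rewrite -hzx; move: hnc; rewrite /pd_continue -/zz; case: lerP.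
set al := m + rho.
set Dd := f xk - ft T zz in h2 hex.
set dec := f xk - f zz.
set del := f zz + m / 2 * r2 - ft T zz.
have hmb : 0 < m + beta * rho by nra.
have he2 : 0 < eta ^+ 2 by apply: exprn_gt0.
have hQ1 : 0 <= 2 * al ^+ 2 / (m + beta * rho) / eta ^+ 2.
  by apply: divr_ge0; [apply: divr_ge0; [apply: mulr_ge0; [lra | apply: sqr_ge0] | lra] | lra].
have hQ2 : 0 <= (1 - beta) / beta / eps.
  by apply: divr_ge0; [apply: divr_ge0; lra | lra].
case: (lerP (al ^+ 2 * r2) (eta ^+ 2)) => hA; last first.
  have hbD : beta * (rho * r2) <= beta * Dd by apply: ler_wpM2l => //; lra.
  have hdece : dec = f xk - f zz by [].
  have hdec : (beta * rho + m / 2) * r2 <= dec by lra.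
  have hbr : 0 <= beta * rho by apply: mulr_ge0; lra.
  have hdec0 : 0 <= dec.
    have : 0 <= (beta * rho + m / 2) * r2 by apply: mulr_ge0 => //; lra.
    lra.
  suff : 1 < dec * (2 * al ^+ 2 / (m + beta * rho) / eta ^+ 2).
    have : 0 <= dec * ((1 - beta) / beta / eps) by apply: mulr_ge0.
    rewrite mulrDr; lra.
  have hd : (m + beta * rho) / 2 * r2 <= dec.
    have : 0 <= beta * rho / 2 * r2 by apply: mulr_ge0 => //; lra.
    lra.
  have -> : dec * (2 * al ^+ 2 / (m + beta * rho) / eta ^+ 2)
     = (2 * dec / (m + beta * rho)) * (al ^+ 2 / eta ^+ 2) by field; apply/andP; split; apply/eqP; lra.
  have hr2' : r2 <= 2 * dec / (m + beta * rho).
    rewrite ler_pdivlMr //; lra.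
  have : 1 < r2 * (al ^+ 2 / eta ^+ 2) by rewrite mulrA ltr_pdivlMr // mul1r mulrC.
  have : r2 * (al ^+ 2 / eta ^+ 2) <= (2 * dec / (m + beta * rho)) * (al ^+ 2 / eta ^+ 2).
    by apply: ler_wpM2r => //; apply: divr_ge0; [apply: sqr_ge0 | lra].
  lra.
have hdele : del = f zz + m / 2 * r2 - ft T zz by [].
have hdece : dec = f xk - f zz by [].
have hDde : Dd = f xk - ft T zz by [].
case: (lerP del eps) => hB; last first.
  have hrr : 0 <= rho * r2 by apply: mulr_ge0 => //; lra.
  have hDd0 : 0 <= Dd by lra.
  have hmr : 0 <= m / 2 * r2 by apply: mulr_ge0 => //; lra.
  have hdec : beta * Dd <= dec by lra.
  have hdel : del <= (1 - beta) * Dd by lra.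
  have hbD0 : 0 <= beta * Dd by apply: mulr_ge0 => //; lra.
  have hdec0 : 0 <= dec by lra.
  suff : 1 < dec * ((1 - beta) / beta / eps).
    have : 0 <= dec * (2 * al ^+ 2 / (m + beta * rho) / eta ^+ 2) by apply: mulr_ge0.
    rewrite mulrDr; lra.
  have -> : dec * ((1 - beta) / beta / eps) = (dec * (1 - beta) / beta) / eps.
    by field; apply/andP; split; apply/eqP; lra.
  rewrite ltr_pdivlMr // mul1r ltr_pdivlMr //.
  have : eps * beta < del * beta by rewrite ltr_pM2r.
  have : del * beta <= (1 - beta) * Dd * beta by rewrite ler_pM2r.
  have : beta * Dd * (1 - beta) <= dec * (1 - beta) by rewrite ler_pM2r //; lra.
  lra.
exfalso; apply: hns => d hd.
exists (al *: u); split.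
  move=> y; have := h1 y.
  have -> : y - xk = (y - zz) + (-1) *: u by rewrite /u; apply/rowP => i; rewrite !mxE; ring.
  rewrite dot_sq_lin -/r2 vnorm_sq dotZl dotZl (dotC (y - zz) u).
  have hee : (-1 : R) ^+ 2 = 1 by rewrite sqrrN expr1n.
  rewrite hee /al; lra.
have hv : vnorm (al *: u) <= eta.
  rewrite -(ler_pXn2r (_ : (0 < 2)%N)) ?nnegrE ?vnorm_ge0 ?(ltW he) //.
  by rewrite vnorm_sq dotZl dotZr mulrA -expr2.
lra.
Qed.



Lemma outer_claim (R : realType) (n : nat) (f : 'rV[R]_n -> R)
    (m L beta rho eta eps : R) (x1 : 'rV[R]_n)
    (x : nat -> 'rV[R]_n) (g : nat -> nat -> 'rV[R]_n)
    (ft : nat -> nat -> 'rV[R]_n -> R) (z : nat -> nat -> 'rV[R]_n)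
    (T : nat -> nat) (k : nat) :
  0 <= m -> lipschitz L f -> 0 < beta -> beta < 1 -> 0 < rho -> 0 < eta -> 0 < eps ->
  prox_descent_run f m beta rho x1 x g ft z T ->
  (forall i, (1 <= i <= k.+1)%N -> ~ inexact_stationary m eta eps f (x i)) ->
  k%:R <= (f x1 - f (x k.+1)) *
        (2 * (m + rho) ^+ 2 / (m + beta * rho) / eta ^+ 2 + (1 - beta) / beta / eps).
Proof.
move=> hm hL hb0 hb1 hr he hep [hx1 hrun].
elim: k => [|k IH] hns; first by rewrite hx1 subrr mul0r.
have hk : (1 <= k.+1)%N by [].
have [htr hterm] := hrun k.+1 hk.
have hnsk : ~ inexact_stationary m eta eps f (x k.+1) by apply: hns; rewrite /= ltnW.
have [hex hxe] := hterm (call_terminates htr hL hm hr hb0 hb1 he hep hnsk).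
have hnsk2 : ~ inexact_stationary m eta eps f (x k.+2) by apply: hns; rewrite /=.
rewrite hxe in hnsk2.
have hd := exit_decrease htr hm hr hb0 hb1 he hep hex hnsk2.
rewrite -hxe in hd.
have : (k%:R : R) <= (f x1 - f (x k.+1)) *
        (2 * (m + rho) ^+ 2 / (m + beta * rho) / eta ^+ 2 + (1 - beta) / beta / eps).
  by apply: IH => i /andP [h1 h2]; apply: hns; rewrite h1 /=; apply: leqW.
rewrite -natr1; move: hd; set Q := (2 * (m + rho) ^+ 2 / (m + beta * rho) / eta ^+ 2 + (1 - beta) / beta / eps).
rewrite !mulrBl; lra.
Qed.

Theorem mainTheorem10 (R : realType) (n : nat) (f : 'rV[R]_n -> R)
    (m L fstar beta rho eta eps : R) (x1 : 'rV[R]_n)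
    (x : nat -> 'rV[R]_n) (g : nat -> nat -> 'rV[R]_n)
    (ft : nat -> nat -> 'rV[R]_n -> R) (z : nat -> nat -> 'rV[R]_n)
    (T : nat -> nat) :
  0 <= m -> weakly_convex m f -> lipschitz L f ->
  (forall y, fstar <= f y) -> (forall e, 0 < e -> exists y, f y < fstar + e) ->
  0 < beta -> beta < 1 -> 0 < rho -> 0 < eta -> 0 < eps ->
  prox_descent_run f m beta rho x1 x g ft z T ->
  let alpha := m + rho in
  let Kmax : int := Num.ceil (2 * alpha ^+ 2 * (f x1 - fstar) / (m + beta * rho) / eta ^+ 2
                       + (1 - beta) * (f x1 - fstar) / beta / eps + 1) in
  exists kstar : nat,
    [/\ (1 <= kstar)%N,
        inexact_stationary m eta eps f (x kstar),
        (forall i, (1 <= i < kstar)%N ->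
           ~ inexact_stationary m eta eps f (x i) /\
           pd_terminates f m beta (x i) (ft i) (z i)),
        (kstar%:R <= Kmax%:~R + 1 :> R) &
        \sum_(1 <= i < kstar) (T i)%:R
          <= 8 * Kmax%:~R / ((1 - beta) ^+ 2 * rho) * (1 + m / rho) ^+ 2 * L ^+ 2
             * Num.max (2 * rho / eta ^+ 2) (1 / eps)].
Proof.
move=> hm _ hL hfs _ hb0 hb1 hr he hep hrun alpha Kmax.
have [hx1 hrk] := hrun.
set Q := 2 * (m + rho) ^+ 2 / (m + beta * rho) / eta ^+ 2 + (1 - beta) / beta / eps.
set Dl := f x1 - fstar.
have hDl : 0 <= Dl by rewrite /Dl; have := hfs x1; lra.
have hmb : 0 < m + beta * rho by nra.
have he2 : 0 < eta ^+ 2 by apply: exprn_gt0.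
have hQ : 0 <= Q.
  apply: addr_ge0.
    by apply: divr_ge0; [apply: divr_ge0; [apply: mulr_ge0; [lra | apply: sqr_ge0] | lra] | lra].
  by apply: divr_ge0; [apply: divr_ge0; lra | lra].
have hK : Dl * Q + 1 <= Kmax%:~R.
  have -> : Dl * Q + 1 = 2 * alpha ^+ 2 * (f x1 - fstar) / (m + beta * rho) / eta ^+ 2
                       + (1 - beta) * (f x1 - fstar) / beta / eps + 1.
    rewrite /Q /Dl /alpha; field; rewrite !gt_eqF //; lra.
  exact: ceil_ge.
have hDQ : 0 <= Dl * Q by apply: mulr_ge0.
set P := 8 / ((1 - beta) ^+ 2 * rho) * (1 + m / rho) ^+ 2 * L ^+ 2
             * Num.max (2 * rho / eta ^+ 2) (1 / eps).
have hP : 0 <= P.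
  rewrite /P; apply: mulr_ge0; last first.
    rewrite le_max; apply/orP; left; apply: divr_ge0; [lra | apply: sqr_ge0].
  apply: mulr_ge0; last by apply: sqr_ge0.
  apply: mulr_ge0; last by apply: sqr_ge0.
  apply: divr_ge0; first lra.
  by apply: mulr_ge0; [apply: sqr_ge0 | lra].
have hN := archi_boundP hDQ.
set N := Num.Def.archi_bound (Dl * Q) in hN.
case: (first_fail (fun i => ~ inexact_stationary m eta eps f (x i)) N.+1) => [H|[ks [h1 h2 h3]]].
  have hc := outer_claim hm hL hb0 hb1 hr he hep hrun H.
  have hf := hfs (x N.+1).
  have : (f x1 - f (x N.+1)) * Q <= Dl * Q by apply: ler_wpM2r => //; rewrite /Dl; lra.
  rewrite -/Q in hc; lra.
have hks1 : (1 <= ks)%N by case/andP: h1.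
have hkle : (ks%:R : R) <= Dl * Q + 2.
  case: ks h1 h2 h3 hks1 => [//|[|k]] h1 h2 h3 hks1.
    by rewrite -[2]/(1 + 1) ; lra.
  have hc := outer_claim hm hL hb0 hb1 hr he hep hrun (k := k) (fun i hi => h3 i hi).
  have hf := hfs (x k.+1).
  have : (f x1 - f (x k.+1)) * Q <= Dl * Q by apply: ler_wpM2r => //; rewrite /Dl; lra.
  rewrite -/Q in hc.
  rewrite -natr1 -natr1; lra.
exists ks; split => //.
- by apply: NNPP.
- move=> i hi; split; first exact: h3.
  have [htr _] := hrk i (proj1 (andP hi)).
  exact: (call_terminates htr hL hm hr hb0 hb1 he hep (h3 i hi)).
- lra.
have hT : forall i, (1 <= i < ks)%N -> (T i)%:R <= P.
  move=> i hi.
  have hi1 : (1 <= i)%N by case/andP: hi.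
  have [htr hterm] := hrk i hi1.
  have [[hT1 _ hc] _] := hterm (call_terminates htr hL hm hr hb0 hb1 he hep (h3 i hi)).
  exact: (call_count htr hL hm hr hb0 hb1 he hep (h3 i hi) hT1 hc).
apply: (@le_trans _ _ (\sum_(1 <= i < ks) P)).
  by rewrite big_nat [X in _ <= X]big_nat; apply: ler_sum => i hi; apply: hT.
rewrite sumr_const_nat -(mulr_natl P).
have : ((ks - 1)%N%:R : R) <= Kmax%:~R.
  rewrite natrB //; lra.
move=> hk.
have -> : 8 * Kmax%:~R / ((1 - beta) ^+ 2 * rho) * (1 + m / rho) ^+ 2 * L ^+ 2
             * Num.max (2 * rho / eta ^+ 2) (1 / eps) = Kmax%:~R * P by rewrite /P; ring.
by apply: ler_wpM2r.
Qed.
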